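(* Consider the $1$-median problem in $\mathbb{R}^1$ where object $i$ has its own maximum speed $v_i>0$. Let $v_M=\max_i v_i$ and $v_m=\min_i v_i$. There is an absolute constant $C$ such that on every instance $I$ with $n$ objects, the measure of the Round-robin strategy is at most $C\,\frac{v_M n}{v_m}\cdot\mathrm{OPT}(I)$.
   Context: Setting. There are $n\ge 2$ objects in $\mathbb{R}^d$; object $i$ follows a trajectory $p_i:[0,\infty)\to\mathbb{R}^d$ with $|p_i(t)-p_i(s)|\le v_i|t-s|$ for all $s,t$, where $v_i>0$ is a known speed bound for object $i$. The initial positions $p_i(0)$ are known. A query strategy queries one object at each time $t=1,2,3,\dots$; querying object $i$ at time $t$ reveals $p_i(t)$. For $t\ge 0$ let $\tau_i(t)$ be the last time $\le t$ at which object $i$ was queried (or $0$ if never). The uncertainty region of object $i$ at time $t$ is the closed ball $U_i(t)$ of radius $v_i(t-\tau_i(t))$ centered at $p_i(\tau_i(t))$. For a center function $f$ mapping an $n$-tuple of points to a point, the uncertainty region of the center at time $t$ is $\{f(q_1,\dots,q_n): q_i\in U_i(t)\}$. The size of a set is its diameter. The measure of a strategy on an instance is the supremum over $t\in\{1,2,\dots\}$ of the size of the center's uncertainty region at time $t$ (just after the query at time $t$). The optimal measure $\mathrm{OPT}(I)$ of an instance $I$ is the infimum of the measure over all query sequences, which may be chosen with full knowledge of the trajectories. The Round-robin strategy queries objects $1,2,\dots,n,1,2,\dots,n,\dots$ in a fixed cyclic order. Here $d=1$ and the center function is the $1$-median: for $x_1,\dots,x_n\in\mathbb{R}$ it is the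 $\lceil n/2\rceil$-th smallest of the $x_i$ if $n$ is odd, and the midpoint of the $(n/2)$-th and $(n/2+1)$-th smallest if $n$ is even. *)

(* Defs.v *)
From HB Require Import structures.
From mathcomp Require Import all_boot all_order all_algebra.
From mathcomp Require Import boolp classical_sets reals constructive_ereal ereal.
Set Implicit Arguments. Unset Strict Implicit. Unset Printing Implicit Defensive.
Import Order.TTheory GRing.Theory Num.Theory.
Local Open Scope ring_scope.
Local Open Scope classical_set_scope.

Section Defs.
Variable R : realType.
Variable n : nat.

(* 1-median of x_1..x_n : the ceil(n/2)-th smallest if n odd, midpoint of the
   (n/2)-th and (n/2+1)-th smallest if n even (0-indexed positions below). *)
Definition median (x : 'I_n -> R) : R :=
  let s := sort <=%R [seq x i | i <- enum 'I_n] in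
  if odd n then nth 0 s n./2
  else (nth 0 s n./2.-1 + nth 0 s n./2) / 2.

(* query sequence: q t is the object queried at time t (t = 1,2,...; q 0 unused) *)
(* last time <= t (and >= 1) at which object i was queried, 0 if never *)
Definition last_query (q : nat -> 'I_n) (i : 'I_n) (t : nat) : nat :=
  \max_(1 <= s < t.+1 | q s == i) s.

Definition in_uncertainty (v : 'I_n -> R) (p : 'I_n -> R -> R)
    (q : nat -> 'I_n) (i : 'I_n) (t : nat) (y : R) : Prop :=
  let tau := last_query q i t in
  `|y - p i tau%:R| <= v i * (t - tau)%:R.

Definition center_region v p q (t : nat) : set R :=
  [set median x | x in [set x : 'I_n -> R | forall i, in_uncertainty v p q i t (x i)]].

Definition diam (A : set R) : \bar R :=
  ereal_sup [set (`|a - b|)%:E | a in A & b in A].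

Definition measure_of v p q : \bar R :=
  ereal_sup [set diam (center_region v p q t) | t in [set t : nat | (0 < t)%N]].

Definition OPT v p : \bar R :=
  ereal_inf [set measure_of v p q | q in [set: nat -> 'I_n]].

(* Round-robin: objects 1,2,...,n,1,2,... at times 1,2,... (0-indexed ordinals) *)
Definition round_robin (q : nat -> 'I_n) : Prop :=
  forall t : nat, (0 < t)%N -> val (q t) = (t.-1 %% n)%N.

Definition speed_bounded (v : 'I_n -> R) (p : 'I_n -> R -> R) : Prop :=
  forall i s t, 0 <= s -> 0 <= t -> `|p i t - p i s| <= v i * `|t - s|.

Definition vmax (v : 'I_n -> R) : R := \big[Num.max/0]_(i < n) v i.
Definition vmin (v : 'I_n -> R) : R := \big[Num.min/vmax v]_(i < n) v i.
End Defs.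

(* Main.v *)
Require Import Defs.
From HB Require Import structures.
From mathcomp Require Import all_boot all_order all_algebra.
From mathcomp Require Import boolp classical_sets reals constructive_ereal ereal.
From mathcomp Require Import zify ring lra.
Import Order.TTheory GRing.Theory Num.Theory.
Local Open Scope ring_scope.

Section OS.
Variable R : realType.

Lemma cnt_iota (P : pred nat) a b : (count P (iota a b) <= b)%N.
Proof. by rewrite (leq_trans (count_size _ _)) // size_iota. Qed.

Lemma count_nthE (s : seq R) (P : pred R) :
  count P s = count (fun m => P (nth 0 s m)) (iota 0 (size s)).
Proof. by rewrite -{1}(mkseq_nth 0 s) count_map. Qed.

Lemma nth_mono (s : seq R) i j : sorted <=%R s -> (i <= j)%N -> (j < size s)%N ->
  nth 0 s i <= nth 0 s j.
Proof.
move=> ss ij js; apply: (sorted_leq_nth le_trans lexx 0 ss) => //; rewrite inE //.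
exact: leq_ltn_trans ij js.
Qed.

Lemma sorted_count_le (s : seq R) j (y : R) : sorted <=%R s -> (j < size s)%N ->
  (j.+1 <= count (fun z : R => (z <= y)%R) s)%N -> nth 0 s j <= y.
Proof.
move=> ss js; apply: contraTT; rewrite -ltNge => yl.
rewrite -ltnNge ltnS count_nthE.
have -> : size s = (j + (size s - j))%N by rewrite subnKC // ltnW.
rewrite iotaD count_cat.
have -> : count (preim (nth 0 s) (fun z : R => (z <= y)%R)) (iota (0 + j) (size s - j)) = 0%N.
  rewrite (@eq_in_count _ _ pred0) ?count_pred0 //.
  move=> m; rewrite mem_iota add0n => /andP[jm mlt] /=.
  apply/negbTE; rewrite -ltNge (lt_le_trans yl) //.
  by apply: nth_mono => //; rewrite -(subnKC (ltnW js)).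
by rewrite addn0 cnt_iota.
Qed.

Lemma sorted_count_ge (s : seq R) j (y : R) : sorted <=%R s -> (j < size s)%N ->
  (size s - j <= count (fun z : R => (y <= z)%R) s)%N -> y <= nth 0 s j.
Proof.
move=> ss js; apply: contraTT; rewrite -ltNge => yl.
rewrite -ltnNge count_nthE.
have -> : size s = (j.+1 + (size s - j.+1))%N by rewrite subnKC.
rewrite iotaD count_cat.
have -> : count (preim (nth 0 s) (fun z : R => (y <= z)%R)) (iota 0 j.+1) = 0%N.
  rewrite (@eq_in_count _ _ pred0) ?count_pred0 //.
  move=> m; rewrite mem_iota add0n => /andP[_ mlt] /=.
  apply/negbTE; rewrite -ltNge (le_lt_trans _ yl) //.
  by apply: nth_mono => //; rewrite -ltnS.
rewrite add0n subnKC //.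
by rewrite (leq_ltn_trans (cnt_iota _ _ _)) // subnS ltn_predL subn_gt0.
Qed.

Lemma sorted_count_nth_le (s : seq R) j : sorted <=%R s -> (j < size s)%N ->
  (j.+1 <= count (fun z : R => (z <= nth 0 s j)%R) s)%N.
Proof.
move=> ss js; rewrite count_nthE.
have -> : size s = (j.+1 + (size s - j.+1))%N by rewrite subnKC.
rewrite iotaD count_cat (leq_trans _ (leq_addr _ _)) //.
rewrite (eq_in_count (a2 := predT)) ?count_predT ?size_iota //.
move=> m; rewrite mem_iota add0n ltnS => /andP[_ mj] /=.
by apply: nth_mono.
Qed.

Lemma sorted_count_nth_ge (s : seq R) j : sorted <=%R s -> (j < size s)%N ->
  (size s - j <= count (fun z : R => (nth 0 s j <= z)%R) s)%N.
Proof.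
move=> ss js; rewrite count_nthE.
have -> : size s = (j + (size s - j))%N by rewrite subnKC // ltnW.
rewrite iotaD count_cat addKn (leq_trans _ (leq_addl _ _)) //.
rewrite (eq_in_count (a2 := predT)) ?count_predT ?size_iota //.
move=> m; rewrite mem_iota => /andP[jm mlt] /=.
by apply: nth_mono => //; rewrite -(subnKC (ltnW js)).
Qed.

Variable n : nat.
Definition os (x : 'I_n -> R) j := nth 0 (sort <=%R [seq x i | i <- enum 'I_n]) j.

Lemma cnt_card (x : 'I_n -> R) (P : pred R) :
  count P (sort <=%R [seq x i | i <- enum 'I_n]) = #|[set i | P (x i)]|.
Proof.
rewrite (permP (permEl (perm_sort _ _))) count_map cardE /enum_mem size_filter.
rewrite count_filter; apply: eq_count => i; rewrite !inE /=; case: (P (x i)) => //.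
Qed.

Lemma size_os (x : 'I_n -> R) : size (sort <=%R [seq x i | i <- enum 'I_n]) = n.
Proof. by rewrite size_sort size_map size_enum_ord. Qed.

Lemma sorted_os (x : 'I_n -> R) : sorted <=%R (sort <=%R [seq x i | i <- enum 'I_n]).
Proof. exact: (sort_sorted le_total). Qed.

Lemma os_le (x : 'I_n -> R) j (y : R) : (j < n)%N -> (j.+1 <= #|[set i | (x i <= y)%R]|)%N -> os x j <= y.
Proof.
move=> jn h; apply: sorted_count_le; rewrite ?sorted_os ?size_os //.
by rewrite (cnt_card x (fun z : R => (z <= y)%R)).
Qed.

Lemma os_ge (x : 'I_n -> R) j (y : R) : (j < n)%N -> (n - j <= #|[set i | (y <= x i)%R]|)%N -> y <= os x j.
Proof.
move=> jn h; apply: sorted_count_ge; rewrite ?sorted_os ?size_os //.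
by rewrite (cnt_card x (fun z : R => (y <= z)%R)).
Qed.

Lemma card_os_le (x : 'I_n -> R) {j} : (j < n)%N -> (j.+1 <= #|[set i | (x i <= os x j)%R]|)%N.
Proof.
move=> jn; rewrite -(cnt_card x (fun z : R => (z <= os x j)%R)).
by apply: sorted_count_nth_le; rewrite ?sorted_os ?size_os.
Qed.

Lemma card_os_ge (x : 'I_n -> R) {j} : (j < n)%N -> (n - j <= #|[set i | (os x j <= x i)%R]|)%N.
Proof.
move=> jn; rewrite -(cnt_card x (fun z : R => (os x j <= z)%R)).
by rewrite -{1}(size_os x); apply: sorted_count_nth_ge; rewrite ?sorted_os ?size_os.
Qed.

Lemma os_lip (x y : 'I_n -> R) j eps : (j < n)%N -> (forall i, x i <= y i + eps) -> os x j <= os y j + eps.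
Proof.
move=> jn h; apply: os_le => //; apply: (leq_trans (@card_os_le y j jn)).
apply/subset_leq_card/fintype.subsetP => i; rewrite !inE => hi.
by rewrite (le_trans (h i)) // lerD2r.
Qed.

Lemma median_os (x : 'I_n -> R) : median x = if odd n then os x n./2 else (os x n./2.-1 + os x n./2) / 2.
Proof. by []. Qed.

End OS.
Arguments os {R n}.
Arguments os_le {R n} x {j} y.
Arguments os_ge {R n} x {j} y.
Arguments card_os_le {R n} x {j}.
Arguments card_os_ge {R n} x {j}.
Arguments os_lip {R n} x y {j} eps.
Section Key.
Variable R : realType.
Variable n : nat.

Lemma card_split (a : 'I_n) (P : pred 'I_n) :
  #|[set i | P i]| = (P a + #|[set i | (i != a) && P i]|)%N.
Proof.
rewrite (cardsD1 a) inE; congr (_ + _)%N; apply: eq_card => i.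
by rewrite !inE.
Qed.

Lemma disj_card (a : 'I_n) (X Y : {set 'I_n}) :
  X \subset [set~ a] -> Y \subset [set~ a] ->
  (forall i, i \in X -> i \in Y -> False) -> (#|X| + #|Y| <= n.-1)%N.
Proof.
move=> sX sY dXY; rewrite -cardsUI.
have -> : X :&: Y = finset.set0.
  apply/setP => i; rewrite !inE; apply/negbTE/negP => /andP[].
  exact: dXY.
rewrite cards0 addn0.
have h : X :|: Y \subset [set~ a] by rewrite finset.subUset sX sY.
by rewrite (leq_trans (subset_leq_card h)) // cardsC1 card_ord.
Qed.

Lemma meet_card (a : 'I_n) (X Y : {set 'I_n}) :
  X \subset [set~ a] -> Y \subset [set~ a] ->
  (n.-1 < #|X| + #|Y|)%N -> exists i, i \in X /\ i \in Y.
Proof.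
move=> sX sY h; apply: contrapT => hn.
have H := @disj_card a X Y sX sY; move: h; rewrite ltnNge H //.
by move=> i iX iY; apply: hn; exists i.
Qed.

Lemma sub_na (a : 'I_n) (P : pred 'I_n) : [set i | (i != a) && P i] \subset [set~ a].
Proof. by apply/fintype.subsetP => i; rewrite !inE => /andP[]. Qed.

End Key.
Arguments card_split {n} a P.
Arguments disj_card {n} a X Y.
Arguments meet_card {n} a X Y.
Arguments sub_na {n} a P.

Section Key2.
Variable R : realType.
Variable n : nat.

Lemma key_odd (a : 'I_n) (e d : R) (c r : 'I_n -> R) :
  c a = e -> r a = 0 -> 0 < d -> (forall i, i != a -> d <= r i) -> odd n ->
  os (fun i => c i + r i) n./2 - os (fun i => c i - r i) n./2 < d ->
  (forall i, - d <= `|c i - e| - r i) /\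
  (forall y, \sum_(i | i != a) `|c i - e| <= \sum_(i | i != a) `|c i - y|).
Proof.
move=> ca ra d0 hr on hM.
set xp := (fun i => c i + r i); set xm := fun i => c i - r i.
set k := n./2; set Mp := os xp k; set Mm := os xm k.
have {}hM : Mp - Mm < d := hM.
have hn : n = (k + k).+1 by rewrite addnn -[LHS]odd_double_half on.
have kn : (k < n)%N by rewrite hn ltnS leq_addr.
have hA := card_os_le xp kn; have hB := card_os_ge xm kn.
rewrite (card_split a) in hA; rewrite (card_split a) in hB.
have xpa : xp a = e by rewrite /xp ca ra addr0.
have xma : xm a = e by rewrite /xm ca ra subr0.
rewrite -/Mp xpa in hA; rewrite -/Mm xma in hB.
set A := [set i | (i != a) && _] in hA.
set B := [set i | (i != a) && _] in hB.
have dAB : forall i, i \in A -> i \in B -> False.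
  move=> i; rewrite !inE => /andP[ia hp] /andP[_ hm]; have := hr i ia.
  move: hp hm hM; rewrite /xp /xm; lra.
have cAB := @disj_card n a A B (sub_na _ _) (sub_na _ _) dAB.
case eMp : (e <= Mp) in hA; last by exfalso; move: hA hB cAB; move: (#|A|) (#|B|) => x y; rewrite hn /=; lia.
case eMm : (Mm <= e) in hB; last by exfalso; move: hA hB cAB; move: (#|A|) (#|B|) => x y; rewrite hn /=; lia.
have cA : #|A| = k by move: hA hB cAB; move: (#|A|) (#|B|) => x y; rewrite hn /=; lia.
have cB : #|B| = k by move: hA hB cAB; move: (#|A|) (#|B|) => x y; rewrite hn /=; lia.
have cover : forall i, i != a -> (i \in A) || (i \in B).
  have eU : A :|: B == [set~ a].
    rewrite eqEcard finset.subUset !sub_na /= cardsC1 card_ord.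
    have := cardsUI A B.
    have -> : A :&: B = finset.set0.
      apply/setP => i; rewrite finset.in_set0; apply/negbTE/negP; rewrite finset.in_setI.
      by move=> /andP[iA iB]; exact: dAB iA iB.
    by rewrite cards0 cA cB; move: (#|A :|: B|) => x; rewrite hn /=; lia.
  by move=> i ia; rewrite -finset.in_setU (eqP eU) !inE.
split.
  move=> i; case: (eqVneq i a) => [->|ia].
    by rewrite ca ra subrr normr0 subr0 oppr_le0 ltW.
  case/orP: (cover i ia); rewrite !inE ia /= /xp /xm => hi.
    have h1 : e - c i <= `|c i - e| by rewrite distrC ler_norm.
    have := hr i ia; move: hi hM eMm; rewrite -/Mp -/Mm; lra.
  have h1 : c i - e <= `|c i - e| by rewrite ler_norm.
  have := hr i ia; move: hi hM eMp; rewrite -/Mp -/Mm; lra.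
move=> y.
have ge : forall i, i != a -> `|c i - e| = (if i \in A then e - c i else c i - e).
  move=> i ia; case: ifP => iA.
    move: iA; rewrite !inE ia /= /xp => hi.
    rewrite ler0_norm ?opprB //; have := hr i ia; move: hi hM eMm; rewrite -/Mp -/Mm; lra.
  have := cover i ia; rewrite iA /= !inE ia /= /xm => hi.
  rewrite ger0_norm //; have := hr i ia; move: hi hM eMp; rewrite -/Mp -/Mm; lra.
have gy : forall i, (if i \in A then y - c i else c i - y) <= `|c i - y|.
  move=> i; case: ifP => _; last exact: ler_norm.
  by rewrite distrC ler_norm.
rewrite (eq_bigr (fun i => if i \in A then e - c i else c i - e)); last exact: ge.
apply: (le_trans _ (ler_sum _ (fun i _ => gy i))).
rewrite -subr_ge0 -sumrB.
rewrite (eq_bigr (fun i => if i \in A then y - e else e - y)); last first.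
  by move=> i _; case: ifP => _; ring.
rewrite (bigID (fun i => i \in A)) /=.
rewrite (eq_bigr (fun _ => y - e)); last by move=> i /andP[_ ->].
rewrite [X in _ + X](eq_bigr (fun _ => e - y)); last by move=> i /andP[_ /negbTE ->].
set D := [set i | (i != a) && (i \notin A)].
rewrite (eq_bigl (fun i => i \in A)); last first.
  by move=> i; rewrite /A !inE; case: (eqVneq i a).
rewrite [X in _ + X](eq_bigl (fun i => i \in D)); last by move=> i; rewrite !inE.
rewrite !sumr_const.
have cD : #|D| = k.
  have := cardsC A; rewrite cA card_ord.
  have := card_split a (fun i => i \notin A).
  have -> : a \in A = false by rewrite !inE eqxx.
  rewrite -/D /=.
  have -> : #|[set i | i \notin A]| = #|~: A| by apply: eq_card => i; rewrite !inE.
  move: (#|D|) (#|~: A|) => x z; rewrite hn; lia.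
by rewrite cA cD -mulrnDl (_ : y - e + (e - y) = 0) ?mul0rn //; ring.
Qed.
End Key2.

Section Key3.
Variable R : realType.
Variable n : nat.

Lemma key_even (a : 'I_n) (e d : R) (c r : 'I_n -> R) :
  c a = e -> r a = 0 -> 0 < d -> (forall i, i != a -> d <= r i) -> ~~ odd n ->
  (os (fun i => c i + r i) n./2.-1 + os (fun i => c i + r i) n./2) / 2 -
  (os (fun i => c i - r i) n./2.-1 + os (fun i => c i - r i) n./2) / 2 < d -> False.
Proof.
move=> ca ra d0 hr on hM.
have n0 : (0 < n)%N by apply: leq_ltn_trans (leq0n a) (ltn_ord a).
set xp := (fun i => c i + r i); set xm := fun i => c i - r i.
set k := n./2.
set p1 := os xp k.-1; set p2 := os xp k; set m1 := os xm k.-1; set m2 := os xm k.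
have {}hM : (p1 + p2) / 2 - (m1 + m2) / 2 < d := hM.
have hn : n = (k + k)%N by rewrite addnn -[LHS]odd_double_half (negbTE on).
have k0 : (0 < k)%N by move: n0; rewrite hn; lia.
have kn : (k < n)%N by rewrite hn; lia.
have k1n : (k.-1 < n)%N by rewrite hn; lia.
have r0 : forall i, 0 <= r i.
  by move=> i; case: (eqVneq i a) => [->|ia]; [rewrite ra | apply: le_trans (ltW d0) (hr i ia)].
have mono : forall j, (j < n)%N -> os xm j <= os xp j.
  move=> j jn; rewrite -[X in _ <= X]addr0; apply: os_lip => // i.
  by rewrite /xm /xp addr0; have := r0 i; lra.
have mp1 : m1 <= p1 := mono _ k1n.
have mp2 : m2 <= p2 := mono _ kn.
have xpa : xp a = e by rewrite /xp ca ra addr0.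
have xma : xm a = e by rewrite /xm ca ra subr0.
have hA1 := card_os_le xp k1n; have hB1 := card_os_ge xm k1n.
have hA2 := card_os_le xp kn; have hB2 := card_os_ge xm kn.
rewrite (card_split a) -/p1 xpa in hA1; rewrite (card_split a) -/m1 xma in hB1.
rewrite (card_split a) -/p2 xpa in hA2; rewrite (card_split a) -/m2 xma in hB2.
set A1 := [set i | (i != a) && _] in hA1.
set B1 := [set i | (i != a) && _] in hB1.
set A2 := [set i | (i != a) && _] in hA2.
set B2 := [set i | (i != a) && _] in hB2.
have d11 : forall i, i \in A1 -> i \in B1 -> False.
  move=> i; rewrite !inE => /andP[ia hp] /andP[_ hm]; have := hr i ia.
  move: hp hm hM mp1 mp2; rewrite /xp /xm; lra.
have d22 : forall i, i \in A2 -> i \in B2 -> False.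
  move=> i; rewrite !inE => /andP[ia hp] /andP[_ hm]; have := hr i ia.
  move: hp hm hM mp1 mp2; rewrite /xp /xm; lra.
have c11 := disj_card a A1 B1 (sub_na _ _) (sub_na _ _) d11.
have c22 := disj_card a A2 B2 (sub_na _ _) (sub_na _ _) d22.
case e1 : (e <= p1) in hA1; last first.
  by exfalso; move: hA1 hB1 c11; move: (#|A1|) (#|B1|) => x y; rewrite hn /=; lia.
case e2 : (m2 <= e) in hB2; last first.
  by exfalso; move: hA2 hB2 c22; move: (#|A2|) (#|B2|) => x y; rewrite hn /=; lia.
have [i [iA iB]] : exists i, i \in A2 /\ i \in B1.
  apply: (meet_card a) => //; try exact: sub_na.
  move: hA2 hB1; move: (#|A2|) (#|B1|) (e <= p2) (m1 <= e) => x y b1 b2.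
  rewrite hn; case: b1; case: b2 => /=; lia.
move: iA iB; rewrite !inE => /andP[ia hp] /andP[_ hm]; have := hr i ia.
move: hp hm hM mp1 mp2 e1 e2; rewrite /xp /xm; lra.
Qed.
End Key3.

Section Time.
Variable R : realType.
Variable n : nat.
Variable v : 'I_n -> R.
Variable p : 'I_n -> R -> R.
Variable q : nat -> 'I_n.

Lemma tau_le i t : (last_query q i t <= t)%N.
Proof.
rewrite /last_query; apply/bigmax_leqP_seq => s.
by rewrite mem_index_iota => /andP[_]; rewrite ltnS.
Qed.

Lemma tau_S i t : last_query q i t.+1 = if q t.+1 == i then t.+1 else last_query q i t.
Proof.
rewrite /last_query big_mkcond big_nat_recr //= -big_mkcond /=.
case: ifP => _; last by rewrite maxn0.
by apply/maxn_idPr; rewrite leqW // -/(last_query q i t) tau_le.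
Qed.

Lemma tau_self t : (0 < t)%N -> last_query q (q t) t = t.
Proof. by case: t => // t _; rewrite tau_S eqxx. Qed.

Lemma tau_other i t : (0 < t)%N -> q t != i -> (last_query q i t < t)%N.
Proof. by case: t => // t _; rewrite tau_S => /negbTE ->; rewrite ltnS tau_le. Qed.

Definition cc t i := p i (last_query q i t)%:R.
Definition rr t i := v i * (t - last_query q i t)%:R.
Definition ee t := p (q t) t%:R.
Definition xp t := fun i => cc t i + rr t i.
Definition xm t := fun i => cc t i - rr t i.

Lemma cc_self t : (0 < t)%N -> cc t (q t) = ee t.
Proof. by move=> t0; rewrite /cc tau_self. Qed.

Lemma rr_self t : (0 < t)%N -> rr t (q t) = 0.
Proof. by move=> t0; rewrite /rr tau_self // subnn mulr0. Qed.

Lemma cc_S t i : q t.+1 != i -> cc t.+1 i = cc t i.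
Proof. by rewrite /cc tau_S => /negbTE ->. Qed.

Lemma rr_S t i : q t.+1 != i -> rr t.+1 i = rr t i + v i.
Proof.
rewrite /rr tau_S => /negbTE ->.
by rewrite subSn ?tau_le // -addn1 natrD mulrDr mulr1.
Qed.

Lemma in_unc t i y : in_uncertainty v p q i t y <-> `|y - cc t i| <= rr t i.
Proof. by []. Qed.

End Time.
Arguments cc {R n} p q t i.
Arguments rr {R n} v q t i.
Arguments ee {R n} p q t.
Arguments xp {R n} v p q t i.
Arguments xm {R n} v p q t i.

Section VM.
Variable R : realType.
Variable n : nat.
Variable v : 'I_n -> R.

Lemma vmax_ge i : v i <= vmax v.
Proof. by rewrite /vmax (bigD1 i) //= le_max lexx. Qed.

Lemma vmin_le i : vmin v <= v i.
Proof. by rewrite /vmin (bigD1 i) //= ge_min lexx. Qed.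

Lemma vmin_gt0 : (0 < n)%N -> (forall i, 0 < v i) -> 0 < vmin v.
Proof.
move=> n0 vp; rewrite /vmin; apply: (big_ind (fun x => 0 < x)).
- exact: lt_le_trans (vp (Ordinal n0)) (vmax_ge _).
- by move=> x y x0 y0; rewrite lt_min x0 y0.
- by move=> i _; apply: vp.
Qed.
End VM.
Arguments vmin_le {R n} v i.
Arguments vmax_ge {R n} v i.
Arguments vmin_gt0 {R n} v.
Arguments tau_le {n} q i t.
Arguments tau_S {n} q i t.
Arguments tau_self {n} q t.
Arguments tau_other {n} q i t.
Arguments cc_self {R n} p q t.
Arguments rr_self {R n} v q t.
Arguments cc_S {R n} p q t i.
Arguments rr_S {R n} v q t i.
Arguments key_odd {R n} a e d c r.
Arguments key_even {R n} a e d c r.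

Section Lower.
Variable R : realType.

Lemma lower_main (n : nat) (v : 'I_n -> R) (p : 'I_n -> R -> R) (q : nat -> 'I_n) :
  (2 <= n)%N -> (forall i, 0 < v i) ->
  exists t, (0 < t)%N /\ vmin v <= median (xp v p q t) - median (xm v p q t).
Proof.
move=> n2 vp.
set vm := vmin v.
have vm0 : 0 < vm by apply: vmin_gt0 => //; apply: leq_trans n2.
have h1 : forall t, (0 < t)%N -> cc p q t (q t) = ee p q t.
  by move=> t t0; apply: cc_self.
have h2 : forall t, (0 < t)%N -> rr v q t (q t) = 0.
  by move=> t t0; apply: rr_self.
have h3 : forall t, (0 < t)%N -> forall i, i != q t -> vm <= rr v q t i.
  move=> t t0 i ia; rewrite /rr; apply: (le_trans (vmin_le v i)).
  apply: ler_peMr; first exact: ltW.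
  rewrite ler1n subn_gt0; apply: tau_other => //.
  by rewrite eq_sym.
case: (boolP (odd n)) => on; last first.
  exists 1%N; split => //; rewrite leNgt; apply/negP => h.
  apply: (key_even (q 1%N) (ee p q 1) vm (cc p q 1) (rr v q 1)) => //.
  - exact: h1.
  - exact: h2.
  - exact: h3.
  by move: h; rewrite /median (negbTE on).
apply: contrapT => H.
have small : forall t, (0 < t)%N ->
    median (xp v p q t) - median (xm v p q t) < vm.
  move=> t t0; rewrite ltNge; apply/negP => h; apply: H; by exists t.
have K : forall t, (0 < t)%N ->
  (forall i, - vm <= `|cc p q t i - ee p q t| - rr v q t i) /\
  (forall y, \sum_(i | i != q t) `|cc p q t i - ee p q t| <=
             \sum_(i | i != q t) `|cc p q t i - y|).
  move=> t t0; apply: key_odd => //; [exact: h1 | exact: h2 | exact: h3 |].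
  by have := small t t0; rewrite /median on.
pose P t := \sum_i (`|cc p q t i - ee p q t| - rr v q t i).
have lowP : forall t, (0 < t)%N -> - (vm *+ n) <= P t.
  move=> t t0; rewrite -mulNrn.
  have E : \sum_(i < n) (- vm) = (- vm) *+ n.
    rewrite (eq_bigl (fun i => i \in [set: 'I_n])); last by move=> i; rewrite inE.
    by rewrite sumr_const cardsT card_ord.
  rewrite -E.
  by apply: ler_sum => i _; case: (K t t0) => A _; apply: A.
have n3 : (3 <= n)%N.
  have n2' : n != 2%N by apply: contraTneq on => ->.
  by move: n2 n2'; lia.
have sumv : forall b : 'I_n, vm *+ 2 <= \sum_(i | i != b) v i.
  move=> b; apply: (@le_trans _ _ (\sum_(i | i != b) vm)); last first.
    by apply: ler_sum => i _; apply: vmin_le.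
  rewrite (eq_bigl (fun i => i \in [set~ b])); last by move=> i; rewrite !inE.
  rewrite sumr_const cardsC1 card_ord.
  have -> : n.-1 = (2 + (n.-1 - 2))%N by move: n3; lia.
  by rewrite mulrnDr lerDl mulrn_wge0 // ltW.
have stepP : forall t, (0 < t)%N -> P t.+1 <= P t - vm.
  move=> t t0; set b := q t.+1.
  have [A1 _] := K t t0; have [_ B1] := K t.+1 (ltn0Sn t).
  have ca := A1 b.
  have cb := B1 (ee p q t).
  have sv := sumv b.
  have eP1 : P t.+1 = \sum_(i | i != b) `|cc p q t.+1 i - ee p q t.+1| -
                      (\sum_(i | i != b) rr v q t i + \sum_(i | i != b) v i).
    rewrite /P (bigD1 b) //= h1 // h2 // subrr normr0 subr0 add0r sumrB.
    rewrite -big_split /=; congr (_ - _); apply: eq_bigr => i ib.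
    by apply: rr_S; rewrite eq_sym.
  have eS : \sum_(i | i != b) `|cc p q t.+1 i - ee p q t| =
            \sum_(i | i != b) `|cc p q t i - ee p q t|.
    apply: eq_bigr => i ib; rewrite cc_S //; by rewrite eq_sym.
  have eP : P t = (`|cc p q t b - ee p q t| - rr v q t b) +
            (\sum_(i | i != b) `|cc p q t i - ee p q t| - \sum_(i | i != b) rr v q t i).
    by rewrite /P (bigD1 b) //= sumrB.
  rewrite eP1 eP; move: cb; rewrite eS; move: ca sv.
  rewrite mulr2n; lra.
have iter : forall m, P m.+1 <= P 1%N - m%:R * vm.
  elim => [|m IH]; first by rewrite mul0r subr0.
  have e : (m.+1)%:R = m%:R + 1 :> R by rewrite -addn1 natrD.
  have := stepP m.+1 (ltn0Sn m); rewrite e mulrDl mul1r.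
  move: IH; lra.
set X := P 1%N + vm *+ n.
have hx : 0 <= `|X| / vm by apply: divr_ge0; [exact: normr_ge0 | exact: ltW].
have := archi_boundP hx; rewrite ltr_pdivrMr //.
set m := Num.Def.archi_bound _ => hm.
have := iter m; have := lowP m.+1 (ltn0Sn m).
have := ler_norm X; rewrite /X; move: hm; rewrite /X; lra.
Qed.
End Lower.

Section Upper.
Variable R : realType.

Lemma rr_tau (n : nat) (q : nat -> 'I_n) i t : round_robin q -> (0 < t)%N ->
  (t - last_query q i t <= n)%N.
Proof.
move=> hq t0; case: (leqP t n) => tn; first by rewrite (leq_trans (leq_subr _ _)).
have n0 : (0 < n)%N by apply: leq_ltn_trans (leq0n i) (ltn_ord i).
suff [s [s1 st qs ts]] : exists s, [/\ (1 <= s)%N, (s <= t)%N, q s == i & (t - s <= n)%N].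
  have : (s <= last_query q i t)%N.
    by apply: (leq_bigmax_seq (F := id)) => //; rewrite mem_index_iota s1 ltnS.
  by move=> h; apply: leq_trans ts; apply: leq_sub2l.
set u := t.-1.
have un : (n <= u)%N by rewrite /u -ltnS prednK.
have hu := div.divn_eq u n.
have hr : (u %% n < n)%N by rewrite ltn_pmod.
set bb := (u %/ n)%N in hu; set rm := (u %% n)%N in hu hr.
have il := ltn_ord i.
have bb1 : (1 <= bb)%N by rewrite /bb divn_gt0.
have wn : (n <= bb * n)%N by rewrite leq_pmull.
have tu : t = u.+1 by rewrite /u prednK.
have wn' : (bb.-1 * n + n = bb * n)%N by rewrite -mulSnr prednK.
clearbody u bb rm; subst t.
case: (leqP i rm) => ir.
  exists (bb * n + i).+1; split => //.
  - by move: hu; lia.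
  - by apply/eqP/val_inj; rewrite /= (hq _ (ltn0Sn _)) /= modnMDl modn_small.
  - by move: hu; lia.
exists ((bb.-1) * n + i).+1; split => //.
- by move: hu wn'; lia.
- by apply/eqP/val_inj; rewrite /= (hq _ (ltn0Sn _)) /= modnMDl modn_small.
- by move: hu wn'; lia.
Qed.

End Upper.

Section Final.
Variable R : realType.

Lemma median_lip (n : nat) (x y : 'I_n -> R) eps : (0 < n)%N ->
  (forall i, `|x i - y i| <= eps) -> `|median x - median y| <= eps.
Proof.
move=> n0 h.
have h1 : forall i, x i <= y i + eps.
  by move=> i; have := h i; rewrite ler_norml; lra.
have h2 : forall i, y i <= x i + eps.
  by move=> i; have := h i; rewrite ler_norml; lra.
have L : forall j, (j < n)%N -> `|os x j - os y j| <= eps.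
  move=> j jn; have := os_lip x y eps jn h1; have := os_lip y x eps jn h2.
  by rewrite ler_norml; lra.
have k1 : (n./2 < n)%N.
  have := odd_double_half n; move: n0; rewrite -addnn.
  by case: (odd n) => /=; move: (n./2) => hh; lia.
have k2 : (n./2.-1 < n)%N by apply: leq_ltn_trans (leq_pred _) k1.
rewrite !median_os; case: ifP => _; first exact: L.
have := L _ k1; rewrite ler_norml => /andP[a1 a2].
have := L _ k2; rewrite ler_norml => /andP[b1 b2].
rewrite ler_norml; apply/andP; split; lra.
Qed.

Lemma diam_ge (n : nat) (v : 'I_n -> R) (p : 'I_n -> R -> R) (q : nat -> 'I_n) t :
  (forall i, 0 < v i) ->
  (`|median (xp v p q t) - median (xm v p q t)|%:E <= diam (center_region v p q t))%E.
Proof.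
move=> vp; apply: ereal_sup_ubound.
have r0 : forall i, 0 <= rr v q t i.
  by move=> i; rewrite /rr; apply: mulr_ge0; [exact: ltW | exact: ler0n].
exists (median (xp v p q t)).
  exists (xp v p q t) => // i; rewrite in_unc /xp addrC addKr ger0_norm //.
exists (median (xm v p q t)) => //.
exists (xm v p q t) => // i; rewrite in_unc /xm addrC addKr normrN ger0_norm //.
Qed.

Lemma measure_ge (n : nat) (v : 'I_n -> R) (p : 'I_n -> R -> R) (q : nat -> 'I_n) :
  (2 <= n)%N -> (forall i, 0 < v i) -> ((vmin v)%:E <= measure_of v p q)%E.
Proof.
move=> n2 vp; have [t [t0 ht]] := @lower_main R n v p q n2 vp.
have hm : (diam (center_region v p q t) <= measure_of v p q)%E.
  by apply: ereal_sup_ubound; exists t.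
apply: le_trans hm.
apply: le_trans (@diam_ge n v p q t vp); rewrite lee_fin.
by apply: le_trans ht (ler_norm _).
Qed.

Lemma opt_ge (n : nat) (v : 'I_n -> R) (p : 'I_n -> R -> R) :
  (2 <= n)%N -> (forall i, 0 < v i) -> ((vmin v)%:E <= OPT v p)%E.
Proof.
move=> n2 vp; apply/ereal_infP => z [q _ <-]; exact: measure_ge.
Qed.

Lemma measure_rr (n : nat) (v : 'I_n -> R) (p : 'I_n -> R -> R) (q : nat -> 'I_n) :
  (2 <= n)%N -> (forall i, 0 < v i) -> round_robin q ->
  (measure_of v p q <= (2 * vmax v * n%:R)%:E)%E.
Proof.
move=> n2 vp hq; have n0 : (0 < n)%N by apply: leq_trans n2.
apply: ge_ereal_sup => z [t t0 <-].
apply: ge_ereal_sup => w [a [x hx <-]] [b [y hy <-]] <-.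
rewrite lee_fin; apply: median_lip => // i.
have := hx i; have := hy i; rewrite !in_unc.
have hb : rr v q t i <= vmax v * n%:R.
  rewrite /rr; apply: ler_pM; [exact: ltW | by [] | exact: vmax_ge |].
  by rewrite ler_nat rr_tau.
move=> h1 h2; have := ler_distD (cc p q t i) (x i) (y i).
rewrite (distrC (cc p q t i) (y i)); lra.
Qed.

End Final.

Theorem proposition5 (R : realType) :
  exists C : R,
  forall (n : nat) (v : 'I_n -> R) (p : 'I_n -> R -> R) (q : nat -> 'I_n),
    (2 <= n)%N ->
    (forall i, 0 < v i) ->
    speed_bounded v p ->
    round_robin q ->
    (measure_of v p q <= (C * vmax v * n%:R / vmin v)%:E * OPT v p)%E.
Proof.
exists 2 => n v p q n2 vp _ hq.
have n0 : (0 < n)%N by apply: leq_trans n2.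
have vm0 : 0 < vmin v by apply: vmin_gt0.
apply: le_trans (@measure_rr R n v p q n2 vp hq) _.
have K0 : 0 <= 2 * vmax v * n%:R / vmin v.
  have vM0 : 0 <= vmax v := le_trans (ltW (vp (Ordinal n0))) (vmax_ge v _).
  apply: divr_ge0; last exact: ltW.
  apply: mulr_ge0; last exact: ler0n.
  by apply: mulr_ge0.
apply: le_trans (lee_pmul _ _ (lexx _) (@opt_ge R n v p n2 vp)); last by rewrite lee_fin ltW.
  by rewrite -EFinM lee_fin divfK ?gt_eqF.
by rewrite lee_fin.
Qed.
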